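(* Let $G$ be a connected graph on at least two vertices, and let $b(G)$ denote its number of blocks. Then \[ \operatorname{cdim}(G)\geq\frac{b(G)+1}{2}. \]
   Context: All graphs are finite, simple, undirected and nonempty. A block of a graph is a maximal connected subgraph that has no cut vertex of its own (so each block of a connected graph with at least two vertices is either a bridge $K_2$ or a maximal $2$-connected subgraph). For distinct vertices $v,w$, $\kappa(v,w)$ is the maximum number of internally vertex-disjoint $v$–$w$ paths (an edge $vw$ counts as one such path); $\kappa(v,v)=\infty$. For an ordered vertex set $W=(w_1,\ldots,w_k)$, $r_G(v,W)=[\kappa(v,w_1),\ldots,\kappa(v,w_k)]$. $W$ is resolving if $r_G(v_1,W)=r_G(v_2,W)$ implies $v_1=v_2$. The connectivity dimension $\operatorname{cdim}(G)$ is the minimum cardinality of a resolving set. *)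

(* Defs.v *)
From HB Require Import structures.
From mathcomp Require Import all_boot all_order all_algebra.
From Stdlib Require Import ClassicalDescription.
Set Implicit Arguments. Unset Strict Implicit. Unset Printing Implicit Defensive.

(* A graph is a relation e on a finite vertex type T; the theorem assumes
   it symmetric and irreflexive (finite simple undirected graph). *)

Definition pb (P : Prop) : bool :=
  if excluded_middle_informative P then true else false.

Section Graph.
Variables (T : finType) (e : rel T).

Definition vw_path (v w : T) (p : seq T) : bool :=
  path e v (rcons p w) && uniq (v :: rcons p w).

Definition disjoint_vw_paths (v w : T) (F : seq (seq T)) : bool :=
  [&& all (vw_path v w) F, uniq F & uniq (flatten F)].

(* kappa v w : None encodes infinity (v = w); otherwise the maximum number
   of internally vertex-disjoint v-w paths.  Such a family has at most
   #|T| - 1 members, so the bound #|T|.+2 on the search range is harmless. *)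
Definition kappa (v w : T) : option nat :=
  if v == w then None
  else Some (\max_(k < #|T|.+2 |
               pb (exists F, disjoint_vw_paths v w F /\ size F = k)) (k : nat)).

Definition resolving (W : {set T}) : bool :=
  [forall v1, forall v2,
     [forall w in W, kappa v1 w == kappa v2 w] ==> (v1 == v2)].

Definition cdim : nat :=
  \big[minn/#|T|]_(W : {set T} | resolving W) #|W|.

Definition restr (B : {set T}) : rel T :=
  [rel x y | [&& e x y, x \in B & y \in B]].

Definition connected_in (B : {set T}) : bool :=
  [forall x in B, forall y in B, connect (restr B) x y].

Definition blocklike (B : {set T}) : bool :=
  connected_in B && [forall v in B, connected_in (B :\ v)].

Definition blocks : {set {set T}} := [set B | maxset blocklike B].

Definition nblocks : nat := #|blocks|.

End Graph.

(* Main.v *)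
Require Import Defs.
From HB Require Import structures.
From mathcomp Require Import all_boot all_order all_algebra zify.
From Stdlib Require Import Classical ClassicalDescription.
Set Implicit Arguments. Unset Strict Implicit. Unset Printing Implicit Defensive.



Section G.
Variables (T : finType) (e : rel T).
Hypothesis e_sym : symmetric e.
Hypothesis e_irr : irreflexive e.

Lemma restrE (S : {set T}) x y : restr e S x y = [&& e x y, x \in S & y \in S].
Proof. by []. Qed.

Lemma restr_e S x y : restr e S x y -> e x y.
Proof. by case/and3P. Qed.

Lemma restr_sym S : symmetric (restr e S).
Proof. by move=> x y; rewrite /restr /= (e_sym x y); case: (e y x); case: (x \in S); case: (y \in S). Qed.

Lemma conn_sym S x y : connect (restr e S) x y = connect (restr e S) y x.
Proof. exact: (sym_connect_sym (restr_sym S)). Qed.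

Lemma restr_mono (S S' : {set T}) x y : S \subset S' ->
  connect (restr e S) x y -> connect (restr e S') x y.
Proof.
move=> sub; apply: connect_sub => a b /and3P[eab aS bS]; apply: connect1.
by rewrite /restr /= eab (subsetP sub _ aS) (subsetP sub _ bS).
Qed.

Lemma path_restr (S : {set T}) x s : path e x s -> x \in S -> all (mem S) s ->
  path (restr e S) x s.
Proof.
elim: s x => //= y s IH x /andP[exy ps] xS /andP[yS aS].
by rewrite restrE exy xS yS IH.
Qed.

Lemma path_restr_all (S : {set T}) x s : path (restr e S) x s -> all (mem S) s.
Proof.
elim: s x => //= y s IH x /andP[]; rewrite restrE => /and3P[_ _ yS] ps; rewrite yS /=; exact: IH ps.
Qed.

Lemma path_restr_e (S : {set T}) x s : path (restr e S) x s -> path e x s.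
Proof. by apply: sub_path => a b; apply: restr_e. Qed.

Lemma prefix_conn (S : {set T}) x s : path e x s -> x \in S -> all (mem S) s ->
  forall y, y \in x :: s -> connect (restr e S) x y.
Proof. by move=> p xS aS y ys; apply: (path_connect (path_restr p xS aS)). Qed.

Lemma hub_connected (S : {set T}) h : h \in S ->
  (forall y, y \in S -> connect (restr e S) h y) -> connected_in e S.
Proof.
move=> hS H; apply/forallP => x; apply/implyP => xS; apply/forallP => y; apply/implyP => yS.
by apply: connect_trans (H y yS); rewrite conn_sym; apply: H.
Qed.

Lemma rev_walk x Q y : path e x (rcons Q y) -> path e y (rcons (rev Q) x).
Proof.
move=> p; have := rev_path e x (rcons Q y).
rewrite last_rcons belast_rcons rev_cons => ->.
by rewrite (eq_path (e' := e)) // => a b; rewrite e_sym.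
Qed.

End G.



Section G2.
Variables (T : finType) (e : rel T).
Hypothesis e_sym : symmetric e.
Hypothesis e_irr : irreflexive e.

Lemma conn_in (S : {set T}) x y : connected_in e S -> x \in S -> y \in S ->
  connect (restr e S) x y.
Proof. by move=> /forallP/(_ x)/implyP H xS yS; move: (H xS) => /forallP/(_ y)/implyP; apply. Qed.

Lemma bl_conn B : blocklike e B -> connected_in e B.
Proof. by case/andP. Qed.

Lemma bl_del B z : blocklike e B -> z \in B -> connected_in e (B :\ z).
Proof. by case/andP=> _ /forallP/(_ z)/implyP; apply. Qed.

Lemma mk_bl (B : {set T}) : connected_in e B ->
  (forall z, z \in B -> connected_in e (B :\ z)) -> blocklike e B.
Proof. by move=> c H; apply/andP; split => //; apply/forallP=> z; apply/implyP; apply: H. Qed.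

Lemma split_mem (z : T) Q : z \in Q -> exists Q1 Q2, Q = Q1 ++ z :: Q2.
Proof. by case/splitPr => Q1 Q2; exists Q1, Q2. Qed.

Lemma ear (B : {set T}) x y Q : blocklike e B -> x \in B -> y \in B -> x != y ->
  path e x (rcons Q y) -> uniq Q -> all (fun z => z \notin B) Q ->
  blocklike e (B :|: [set z in Q]).
Proof.
move=> bB xB yB nxy p uQ aQ.
have pQ : path e x Q by move: p; rewrite rcons_path => /andP[].
have rQ : path e y (rev Q).
  by move: (rev_walk e_sym p); rewrite rcons_path => /andP[].
set S := B :|: [set z in Q].
have BS : B \subset S by apply/subsetP => z zB; rewrite inE zB.
have QS : forall z, z \in Q -> z \in S by move=> z zQ; rewrite !inE zQ orbT.
have QnB : forall z, z \in Q -> z \notin B by move=> z zQ; exact: (allP aQ z zQ).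
apply: mk_bl.
  apply: (hub_connected e_sym (h := x)); first by rewrite inE xB.
  move=> z; rewrite !inE => /orP[zB|zQ].
    by apply: (restr_mono BS); apply: conn_in => //; apply: bl_conn.
  apply: (prefix_conn pQ); first by rewrite inE xB.
    by apply/allP => w wQ; apply: QS.
  by rewrite inE zQ orbT.
move=> z; rewrite !inE => /orP[zB|zQ].
  have sub : B :\ z \subset S :\ z by apply: setSD.
  have QSz : all (mem (S :\ z)) Q.
    apply/allP => w wQ /=; rewrite in_setD1 QS // andbT.
    by apply/eqP => wz; move: (QnB w wQ); rewrite wz zB.
  case: (eqVneq z x) => [zx|zx].
    subst z; apply: (hub_connected e_sym (h := y)); first by rewrite !inE eq_sym nxy yB.
    move=> w; rewrite !inE => /andP[wx /orP[wB|wQ]].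
      by apply: (restr_mono sub); apply: conn_in; [apply: bl_del|rewrite !inE eq_sym nxy|rewrite !inE wx].
    apply: (prefix_conn rQ); first by rewrite !inE eq_sym nxy yB.
      by apply/allP => v; rewrite mem_rev; apply: (allP QSz).
    by rewrite inE mem_rev wQ orbT.
  apply: (hub_connected e_sym (h := x)); first by rewrite !inE eq_sym zx xB.
  move=> w; rewrite !inE => /andP[wz /orP[wB|wQ]].
    by apply: (restr_mono sub); apply: conn_in; [apply: bl_del|rewrite !inE eq_sym zx|rewrite !inE wz].
  apply: (prefix_conn pQ); first by rewrite !inE eq_sym zx xB.
    exact: QSz.
  by rewrite inE wQ orbT.
have zB : z \notin B by apply: QnB.
have [Q1 [Q2 eQ]] := split_mem zQ.
have QS' : forall w, w \in Q1 ++ z :: Q2 -> w \in S by rewrite -eQ.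
rewrite eQ in p uQ pQ rQ.
have BSz : B \subset S :\ z.
  apply/subsetP => w wB; rewrite !inE wB andbT.
  by apply/eqP => wz; move: zB; rewrite -wz wB.
have zQ2 : z \notin Q2 by move: (uQ); rewrite cat_uniq => /and3P[_ _ /andP[]].
have zQ1 : z \notin Q1.
  by move: (uQ); rewrite cat_uniq => /and3P[_ H _]; apply/negP => zq; move: H; rewrite /= zq.
have conB : forall w, w \in B -> connect (restr e (S :\ z)) x w.
  by move=> w wB; apply: (restr_mono BSz); apply: conn_in => //; apply: bl_conn.
apply: (hub_connected e_sym (h := x)); first by rewrite !inE xB andbT; apply/eqP => xz; move: zB; rewrite -xz xB.
move=> w; rewrite !inE => /andP[wz /orP[wB|wQ]]; first exact: conB.
move: wQ; rewrite eQ mem_cat inE (negbTE wz) /= => /orP[wQ1|wQ2].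
  move: pQ; rewrite cat_path => /andP[pQ1 _].
  apply: (prefix_conn pQ1); first by rewrite !inE xB andbT; apply/eqP => xz; move: zB; rewrite -xz xB.
    apply/allP => v vQ1 /=; rewrite in_setD1 QS' ?mem_cat ?vQ1 // andbT.
    by apply/eqP => vz; move: zQ1; rewrite -vz vQ1.
  by rewrite inE wQ1 orbT.
apply: connect_trans (conB y yB) _.
move: rQ; rewrite rev_cat rev_cons cat_path rcons_path => /andP[/andP[rQ2 _] _].
apply: (prefix_conn rQ2); first by rewrite !inE yB andbT; apply/eqP => yz; move: zB; rewrite -yz yB.
  apply/allP => v; rewrite mem_rev => vQ2 /=.
  rewrite in_setD1 QS' ?mem_cat ?inE ?vQ2 ?orbT // andbT.
  by apply/eqP => vz; move: zQ2; rewrite -vz vQ2.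
by rewrite inE mem_rev wQ2 !orbT.
Qed.

End G2.



Section G3.
Variables (T : finType) (e : rel T).
Hypothesis e_sym : symmetric e.
Hypothesis e_irr : irreflexive e.

Lemma blk_bl B : B \in blocks e -> blocklike e B.
Proof. by rewrite inE => /maxsetp. Qed.

Lemma blk_max B C : B \in blocks e -> blocklike e C -> B \subset C -> C = B.
Proof. by rewrite inE => /maxsetsup; apply. Qed.

Lemma edge_bl x y : e x y -> blocklike e [set x; y].
Proof.
move=> exy; have nxy : x != y by apply/eqP => ex; move: exy; rewrite ex e_irr.
apply: mk_bl.
  apply: (hub_connected e_sym (h := x)); first by rewrite !inE eqxx.
  move=> w; rewrite !inE => /orP[/eqP->|/eqP->]; first exact: connect0.
  by apply: connect1; rewrite restrE exy !inE !eqxx orbT.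
move=> z zS; apply/forallP => a; apply/implyP => aS; apply/forallP => b; apply/implyP => bS.
suff -> : a = b by apply: connect0.
move: zS aS bS; rewrite !inE.
case/orP=> /eqP->; case/andP=> az /orP[]/eqP ea; case/andP=> bz /orP[]/eqP eb; subst;
  rewrite ?eqxx // in az bz.
Qed.

Lemma nbr (S : {set T}) x y : connected_in e S -> x \in S -> y \in S -> x != y ->
  exists2 z, z \in S & e x z.
Proof.
move=> c xS yS nxy; move: (conn_in c xS yS) => /connectP[[|z s] p ey].
  by move: nxy; rewrite ey eqxx.
by move: p => /= /andP[]; rewrite restrE => /and3P[exz _ zS] _; exists z.
Qed.

Lemma bl_del' B z : blocklike e B -> connected_in e (B :\ z).
Proof.
move=> b; case: (boolP (z \in B)) => zB; first exact: bl_del.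
have -> : B :\ z = B.
  by apply/setP => w; rewrite !inE; case: (eqVneq w z) => // ->; rewrite (negbTE zB).
exact: bl_conn.
Qed.

Lemma union_bl B1 B2 x y : blocklike e B1 -> blocklike e B2 ->
  x \in B1 -> x \in B2 -> y \in B1 -> y \in B2 -> x != y -> blocklike e (B1 :|: B2).
Proof.
move=> b1 b2 x1 x2 y1 y2 nxy.
have s1 : B1 \subset B1 :|: B2 by apply: subsetUl.
have s2 : B2 \subset B1 :|: B2 by apply: subsetUr.
apply: mk_bl.
  apply: (hub_connected e_sym (h := x)); first by rewrite inE x1.
  move=> w; rewrite inE => /orP[w1|w2].
    by apply: (restr_mono s1); apply: conn_in => //; apply: bl_conn.
  by apply: (restr_mono s2); apply: conn_in => //; apply: bl_conn.
move=> z _.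
have [h [hz h1 h2]] : exists h, [/\ h != z, h \in B1 & h \in B2].
  case: (eqVneq x z) => [xz|xz]; last by exists x.
  by exists y; split => //; rewrite -xz eq_sym.
have t1 : B1 :\ z \subset (B1 :|: B2) :\ z by apply: setSD.
have t2 : B2 :\ z \subset (B1 :|: B2) :\ z by apply: setSD.
apply: (hub_connected e_sym (h := h)); first by rewrite !inE hz h1.
move=> w; rewrite !inE => /andP[wz /orP[w1|w2]].
  by apply: (restr_mono t1); apply: conn_in; [apply: bl_del'|rewrite !inE hz|rewrite !inE wz].
by apply: (restr_mono t2); apply: conn_in; [apply: bl_del'|rewrite !inE hz|rewrite !inE wz].
Qed.

Lemma blk_share B1 B2 x y : B1 \in blocks e -> B2 \in blocks e ->
  x \in B1 -> x \in B2 -> y \in B1 -> y \in B2 -> x != y -> B1 = B2.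
Proof.
move=> k1 k2 x1 x2 y1 y2 nxy.
have bU := union_bl (blk_bl k1) (blk_bl k2) x1 x2 y1 y2 nxy.
have e1 := blk_max k1 bU (subsetUl _ _).
have e2 := blk_max k2 bU (subsetUr _ _).
exact: (etrans (esym e1) e2).
Qed.

Lemma FH0 (B : {set T}) x s : x \notin B -> path e x s -> last x s \in B ->
  exists Q z rest, [/\ s = Q ++ z :: rest, z \in B & all (fun w => w \notin B) Q].
Proof.
elim: s x => [|a s IH] x xB /=; first by move=> _ xB'; move: xB; rewrite xB'.
move=> /andP[_ p] l; case: (boolP (a \in B)) => aB.
  by exists [::], a, s.
have [Q [z [rest [-> zB aQ]]]] := IH a aB p l.
by exists (a :: Q), z, rest; rewrite /= aB aQ.
Qed.

Lemma EC (B : {set T}) x z Q : B \in blocks e -> x \in B -> z \in B -> x != z ->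
  Q != [::] -> all (fun w => w \notin B) Q -> path e x (rcons Q z) -> False.
Proof.
move=> kB xB zB nxz nQ aQ p.
pose e' := [rel a b | e a b && ~~ ((a \in B) && (b \in B))].
have pe' : path e' x (rcons Q z).
  case: Q nQ aQ p => // a Q _ /= /andP[aB aQ] /andP[exa p].
  rewrite /= exa (negbTE aB) andbF /=; clear exa.
  elim: Q a aB aQ p => [|b Q IH] a aB aQ /=; first by rewrite (negbTE aB) /= andbT => ->.
  move=> /andP[eab p]; move: aQ => /= /andP[bB aQ].
  by rewrite eab (negbTE aB) /= IH.
have [p' [pp' up' sp' lz]] : exists p', [/\ path e' x p', uniq (x :: p'), {subset p' <= rcons Q z} & last x p' = z].
  by move: (last_rcons x Q z); case: (shortenP pe') => p' a b c H; exists p'; split.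
case/lastP: p' pp' up' sp' lz => [|Q' z'] pp' up' sp'.
  by move=> /= zx; move: nxz; rewrite zx eqxx.
rewrite last_rcons => ez; subst z'.
have nQ' : Q' != [::].
  by apply/eqP => eq; move: pp'; rewrite eq /= xB zB /= !andbF.
have Q'nz : z \notin Q'.
  by move: up'; rewrite /= rcons_uniq => /andP[_ /andP[]].
have aQ' : all (fun w => w \notin B) Q'.
  apply/allP => w wQ'; have : w \in rcons Q z by apply: sp'; rewrite mem_rcons inE wQ' orbT.
  rewrite mem_rcons inE => /orP[/eqP ewz|wQ]; first by move: Q'nz; rewrite -ewz wQ'.
  exact: (allP aQ).
have uQ' : uniq Q' by move: up'; rewrite /= rcons_uniq => /andP[_ /andP[_ ->]].
have pQ' : path e x (rcons Q' z) by apply: sub_path pp' => a b /andP[].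
have bl := ear e_sym (blk_bl kB) xB zB nxz pQ' uQ' aQ'.
have eqB := blk_max kB bl (subsetUl _ _).
case: Q' nQ' aQ' {pp' up' sp' Q'nz uQ' pQ' bl} eqB => // w Q' _ /= /andP[wB _] eqB.
by move: wB; rewrite -eqB !inE eqxx !orbT.
Qed.

End G3.


From Stdlib Require Import Classical.

Section G4.
Variables (T : finType) (e : rel T).
Hypothesis e_sym : symmetric e.
Hypothesis e_irr : irreflexive e.
Hypothesis e_conn : forall x y : T, connect e x y.
Variable r : T.

Definition Entry (B : {set T}) (c : T) : Prop :=
  c \in B /\ (c = r \/ (r \notin B /\
     exists Q, all (fun w => w \notin B) Q /\ path e r (rcons Q c))).

Definition child (B : {set T}) (v : T) : Prop := v \in B /\ ~ Entry B v.

Lemma Entry_r (B : {set T}) : r \in B -> Entry B r.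
Proof. by move=> rB; split => //; left. Qed.

Lemma Uent B c1 c2 : B \in blocks e -> Entry B c1 -> Entry B c2 -> c1 = c2.
Proof.
move=> kB [c1B H1] [c2B H2].
case: H1 => [e1|[rB [Q1 [a1 p1]]]]; case: H2 => [e2|[rB' [Q2 [a2 p2]]]].
- by rewrite e1 e2.
- by move: rB'; rewrite -e1 c1B.
- by move: rB; rewrite -e2 c2B.
case: (eqVneq c1 c2) => // n12; exfalso.
apply: (EC e_sym kB c1B c2B n12 (Q := rev Q1 ++ r :: Q2)).
- by case: (rev Q1).
- by rewrite all_cat /= all_rev a1 a2 rB.
rewrite rcons_cat -cat_rcons cat_path (rev_walk e_sym p1) last_rcons /=.
by move: p2; rewrite /=.
Qed.

Lemma child_neq_r (B : {set T}) v : child B v -> v != r.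
Proof.
case=> vB nE; apply/eqP => evr; apply: nE; rewrite evr; apply: Entry_r; by rewrite -evr.
Qed.

Lemma S1 B1 B2 v z : B1 \in blocks e -> B2 \in blocks e -> B1 != B2 ->
  v \in B1 -> v \in B2 -> z \in B1 -> z != v ->
  exists Q2, [/\ z \notin B2, all (fun w => w \notin B2) Q2 & path e z (rcons Q2 v)].
Proof.
move=> k1 k2 n12 v1 v2 z1 nzv.
have out : forall w, w \in B1 -> w != v -> w \notin B2.
  move=> w w1 nwv; apply/negP => w2; move/eqP: n12; apply.
  exact: (blk_share e_sym k1 k2 w1 w2 v1 v2 nwv).
have /connectP [s ps ls] := conn_in (bl_conn (blk_bl k1)) z1 v1.
have zv : z \notin [set v] by rewrite inE.
have lsv : last z s \in [set v] by rewrite -ls inE.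
have [Q2 [v' [rest [es v'v aQ2]]]] := FH0 zv (path_restr_e ps) lsv.
move: v'v; rewrite inE => /eqP ev'; subst v'.
move: (ps); rewrite es cat_path => /andP[pQ2 /= /andP[lv _]].
have aQ2B1 : all (mem B1) Q2.
  by move: (path_restr_all ps); rewrite es all_cat => /andP[].
exists Q2; split; first exact: out.
  apply/allP => w wQ2; apply: out.
    exact: (allP aQ2B1).
  by move: aQ2 => /allP/(_ w wQ2); rewrite inE.
rewrite rcons_path (path_restr_e pQ2) /=.
by move: lv; rewrite restrE => /andP[].
Qed.

Lemma S2 B1 B2 v z Q : B1 \in blocks e -> B2 \in blocks e -> B1 != B2 ->
  v \in B1 -> v \in B2 -> ~ Entry B2 v -> z \in B1 -> r \notin B2 ->
  all (fun w => w \notin B2) Q -> path e r (rcons Q z) -> False.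
Proof.
move=> k1 k2 n12 v1 v2 nE z1 rB2 aQ p.
case: (eqVneq z v) => [ezv|nzv].
  by apply: nE; split => //; right; split => //; exists Q; rewrite -ezv.
have [Q2 [zB2 aQ2 pQ2]] := S1 k1 k2 n12 v1 v2 z1 nzv.
apply: nE; split => //; right; split => //; exists (Q ++ z :: Q2); split.
  by rewrite all_cat aQ /= zB2 aQ2.
by rewrite rcons_cat -cat_rcons cat_path p last_rcons.
Qed.

Lemma S2r B1 B2 v : B1 \in blocks e -> B2 \in blocks e -> B1 != B2 ->
  v \in B1 -> v \in B2 -> ~ Entry B2 v -> r \in B1 -> r != v -> False.
Proof.
move=> k1 k2 n12 v1 v2 nE r1 nrv.
have [Q2 [rB2 aQ2 pQ2]] := S1 k1 k2 n12 v1 v2 r1 nrv.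
by apply: nE; split => //; right; split => //; exists Q2.
Qed.

Lemma Uchild B1 B2 v : B1 \in blocks e -> B2 \in blocks e ->
  child B1 v -> child B2 v -> B1 = B2.
Proof.
move=> k1 k2 [v1 nE1] [v2 nE2]; case: (eqVneq B1 B2) => // n12; exfalso.
have n21 : B2 != B1 by rewrite eq_sym.
case: (boolP (r \in B1)) => r1.
  have rv : r != v by apply/eqP => erv; apply: nE1; rewrite -erv; apply: Entry_r.
  exact: (S2r k1 k2 n12 v1 v2 nE2 r1 rv).
case: (boolP (r \in B2)) => r2.
  have rv : r != v by apply/eqP => erv; apply: nE2; rewrite -erv; apply: Entry_r.
  exact: (S2r k2 k1 n21 v2 v1 nE1 r2 rv).
have /connectP [s ps ls] := e_conn r v.
have rU : r \notin B1 :|: B2 by rewrite inE negb_or r1 r2.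
have lsU : last r s \in B1 :|: B2 by rewrite -ls inE v1.
have [Q [z [rest [es zU aQ]]]] := FH0 rU ps lsU.
have pQ : path e r (rcons Q z).
  by move: ps; rewrite es cat_path /= => /andP[p1 /andP[ez _]]; rewrite rcons_path p1.
have aQ1 : all (fun w => w \notin B1) Q.
  by apply/allP => w /(allP aQ); rewrite inE negb_or => /andP[].
have aQ2 : all (fun w => w \notin B2) Q.
  by apply/allP => w /(allP aQ); rewrite inE negb_or => /andP[].
move: zU; rewrite inE => /orP[z1|z2].
  exact: (S2 k1 k2 n12 v1 v2 nE2 z1 r2 aQ2 pQ).
exact: (S2 k2 k1 n21 v2 v1 nE1 z2 r1 aQ1 pQ).
Qed.

Lemma child_exists B x y : B \in blocks e -> x \in B -> y \in B -> x != y ->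
  exists v, child B v.
Proof.
move=> kB xB yB nxy.
case: (Classical_Prop.classic (Entry B x)) => Ex; last by exists x.
case: (Classical_Prop.classic (Entry B y)) => Ey; last by exists y.
by move: nxy; rewrite (Uent kB Ex Ey) eqxx.
Qed.

End G4.



Section G5.
Variables (T : finType) (e : rel T).
Hypothesis e_sym : symmetric e.
Hypothesis e_irr : irreflexive e.
Hypothesis e_conn : forall x y : T, connect e x y.

Lemma pbE (P : Prop) : pb P = true <-> P.
Proof. by rewrite /pb; case: excluded_middle_informative. Qed.

Lemma kappa_ge v w F : v != w -> disjoint_vw_paths e v w F -> size F < #|T|.+2 ->
  exists m, kappa e v w = Some m /\ size F <= m.
Proof.
move=> nvw dF sF; rewrite /kappa (negbTE nvw); eexists; split; first reflexivity.
have := @leq_bigmax_cond _ (fun k : 'I_#|T|.+2 =>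
   pb (exists F0, disjoint_vw_paths e v w F0 /\ size F0 = k)) (fun k => nat_of_ord k) (Ordinal sF).
apply; apply/pbE; by exists F.
Qed.

Lemma kappa_le v w m : v != w ->
  (forall F, disjoint_vw_paths e v w F -> size F <= m) ->
  exists m', kappa e v w = Some m' /\ m' <= m.
Proof.
move=> nvw H; rewrite /kappa (negbTE nvw); eexists; split; first reflexivity.
apply/bigmax_leqP => i /pbE [F [dF <-]]; exact: H.
Qed.

Lemma simple_path v w : v != w -> exists P, vw_path e v w P.
Proof.
move=> nvw; have /connectP [s ps ls] := e_conn v w.
have [p' [pp up lp]] : exists p', [/\ path e v p', uniq (v :: p') & last v p' = w].
  by move: ls; case: (shortenP ps) => p' a b _ ->; exists p'.
case/lastP: p' pp up lp => [|P z] pp up lp.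
  by move: nvw; rewrite -lp /= eqxx.
move: lp; rewrite last_rcons => ezw; subst z.
by exists P; rewrite /vw_path pp up.
Qed.

Lemma kappa_ge1 v w : v != w -> exists m, kappa e v w = Some m /\ 1 <= m.
Proof.
move=> nvw; have [P hP] := simple_path nvw.
have dF : disjoint_vw_paths e v w [:: P].
  rewrite /disjoint_vw_paths /= hP /= cats0.
  by move: hP => /andP[_]; rewrite /= rcons_uniq => /andP[_ /andP[]].
by have := kappa_ge nvw dF; apply.
Qed.

Lemma cyc_aux v w a P1 P2 : v != w -> vw_path e v w (a :: P1) -> vw_path e v w P2 ->
  uniq ((a :: P1) ++ P2) ->
  exists C, [/\ blocklike e C, v \in C, w \in C & 2 < #|C|].
Proof.
move=> nvw /andP[p1 u1] /andP[p2 u2] u12.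
move: p1 => /= /andP[eva p1].
have av : a != v by apply/eqP => eav; move: eva; rewrite eav e_irr.
set Q := P1 ++ w :: rev P2.
have pQ : path e a (rcons Q v).
  rewrite /Q rcons_cat /= -cat_rcons cat_path p1 last_rcons.
  exact: (rev_walk e_sym p2).
have vn1 : v \notin a :: rcons P1 w by move: u1 => /andP[].
have an1 : a \notin rcons P1 w by move: u1 => /andP[_ /andP[]].
have ur1 : uniq (rcons P1 w) by move: u1 => /andP[_ /andP[]].
have vP1 : v \notin P1 by apply/negP => h; move: vn1; rewrite inE mem_rcons inE h !orbT.
have aP1 : a \notin P1 by apply/negP => h; move: an1; rewrite mem_rcons inE h !orbT.
have aw : a != w by apply/negP => /eqP h; move: an1; rewrite mem_rcons inE h eqxx.
have wP1 : w \notin P1 by move: ur1; rewrite rcons_uniq => /andP[].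
have uP1 : uniq P1 by move: ur1; rewrite rcons_uniq => /andP[].
have vn2 : v \notin rcons P2 w by move: u2 => /andP[].
have ur2 : uniq (rcons P2 w) by move: u2 => /andP[].
have vP2 : v \notin P2 by apply/negP => h; move: vn2; rewrite mem_rcons inE h !orbT.
have wP2 : w \notin P2 by move: ur2; rewrite rcons_uniq => /andP[].
have uP2 : uniq P2 by move: ur2; rewrite rcons_uniq => /andP[].
have vw := nvw.
have dis : forall x, x \in P2 -> x \notin a :: P1.
  move=> x xP2; apply/negP => xP1; move: u12; rewrite cat_uniq => /and3P[_ /hasP H _].
  by apply: H; exists x.
have uQ : uniq Q.
  rewrite /Q -cat1s uniq_catCA cat1s cons_uniq mem_cat mem_rev negb_or (negbTE wP1) (negbTE wP2) /=.
  rewrite (perm_uniq (s2 := P1 ++ P2)); last by rewrite perm_cat2l perm_rev.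
  rewrite cat_uniq uP1 uP2 /= andbT; apply/hasPn => x xP2; apply/negP => xP1.
  by move: (dis x xP2); rewrite inE xP1 orbT.
have aQ : all (fun z => z \notin [set v; a]) Q.
  apply/allP => z; rewrite /Q mem_cat inE mem_rev !inE => /orP[zP1|/orP[/eqP->|zP2]].
  - apply/norP; split; apply/negP => /eqP ez; subst z; first by rewrite zP1 in vP1.
    by rewrite zP1 in aP1.
  - by rewrite negb_or (eq_sym w v) vw (eq_sym w a) aw.
  - apply/norP; split; apply/negP => /eqP ez; subst z; first by rewrite zP2 in vP2.
    by move: (dis a zP2); rewrite mem_head.
have bl := ear e_sym (edge_bl e_sym e_irr eva) (x := a) (y := v) (Q := Q).
have aS : a \in [set v; a] by rewrite !inE eqxx orbT.
have vS : v \in [set v; a] by rewrite !inE eqxx.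
have blC := bl aS vS av pQ uQ aQ. exists ([set v; a] :|: [set z in Q]); split => //.
- by rewrite !inE eqxx.
- by rewrite !inE /Q mem_cat inE eqxx orbT !orbT.
have pr : [set v; a] \proper [set v; a] :|: [set z in Q].
  apply/properP; split; first exact: subsetUl.
  exists w; first by rewrite !inE /Q mem_cat inE eqxx !orbT.
  by rewrite !inE negb_or (eq_sym w v) vw (eq_sym w a) aw.
by move: (proper_card pr); rewrite cards2 eq_sym av.
Qed.

Lemma cycle_big v w F : v != w -> disjoint_vw_paths e v w F -> 1 < size F ->
  exists C, [/\ blocklike e C, v \in C, w \in C & 2 < #|C|].
Proof.
case: F => [|P1 [|P2 F]] // nvw /and3P[aF uF uflat] _.
move: aF => /= /and3P[h1 h2 _].
move: uF => /= /andP[]; rewrite inE negb_or => /andP[n12 _] _.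
move: uflat => /=; rewrite catA => uflat.
have u12 : uniq (P1 ++ P2) by move: uflat; rewrite cat_uniq => /andP[].
clear uflat.
case: P1 h1 n12 u12 => [|a P1] h1 n12 u12.
  case: P2 h2 n12 u12 => [|b P2] h2 n12 u12; first by rewrite eqxx in n12.
  by apply: (cyc_aux nvw h2 h1); rewrite cats0 in u12 *.
by apply: (cyc_aux nvw h1 h2).
Qed.

Lemma K1 v w : v != w ->
  (forall B, B \in blocks e -> v \in B -> w \in B -> #|B| <= 2) ->
  kappa e v w = Some 1.
Proof.
move=> nvw H.
have [m [km m1]] := kappa_ge1 nvw.
have [m' [km' m'1]] : exists m', kappa e v w = Some m' /\ m' <= 1.
  apply: kappa_le => // F dF; rewrite leqNgt; apply/negP => sF.
  have [C [bC vC wC cC]] := cycle_big nvw dF sF.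
  have [B mB sCB] := maxset_exists bC.
  have kB : B \in blocks e by rewrite inE.
  move: (H B kB (subsetP sCB _ vC) (subsetP sCB _ wC)) => HB.
  by have := leq_trans cC (subset_leq_card sCB); rewrite ltnNge HB.
by move: km'; rewrite km => -[em]; subst m'; have -> : m = 1 by apply/eqP; rewrite eqn_leq m1 m'1.
Qed.

End G5.



Section G6.
Variables (T : finType) (e : rel T).
Hypothesis e_sym : symmetric e.
Hypothesis e_irr : irreflexive e.

Lemma Stay B u p P : B \in blocks e -> u \in B -> p \in B -> u != p ->
  path e u (rcons P p) -> uniq (u :: rcons P p) -> last u P \in B.
Proof.
move=> kB uB pB nup pP uP; apply/negPn/negP => xB.
case/lastP: P pP uP xB => [|P0 x] pP uP; first by rewrite /= uB.
rewrite last_rcons => xB.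
move: (rev_walk e_sym pP); rewrite rev_rcons /= => /andP[epx px].
have lu : last x (rcons (rev P0) u) \in B by rewrite last_rcons.
have [Q [z [rest [es zB aQ]]]] := FH0 xB px lu.
have pnP : p \notin rcons P0 x.
  by move: uP => /= /andP[_]; rewrite rcons_uniq => /andP[].
have zp : p != z.
  apply/eqP => epz; subst z.
  have : p \in rcons (rev P0) u by rewrite es mem_cat inE eqxx orbT.
  rewrite mem_rcons inE mem_rev => /orP[/eqP epu|pP0]; first by rewrite epu eqxx in nup.
  by move: pnP; rewrite mem_rcons inE pP0 orbT.
apply: (EC e_sym kB pB zB zp (Q := x :: Q)) => //.
  by rewrite /= xB aQ.
rewrite /= epx rcons_path.
by move: px; rewrite es cat_path /= => /andP[-> /andP[-> _]].
Qed.

Lemma last_mem (u : T) P : P != [::] -> last u P \in P.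
Proof. by case: P => // b P _; rewrite /= mem_last. Qed.

Lemma map_last_uniq u p F : all (vw_path e u p) F -> uniq F -> uniq (flatten F) ->
  uniq (map (last u) F).
Proof.
elim: F => //= P F IH /andP[hP aF] /andP[PF uF]; rewrite cat_uniq => /and3P[uP dis ufl].
rewrite IH // andbT.
have unP : forall P0, vw_path e u p P0 -> u \notin P0.
  by move=> P0 /andP[_] /= /andP[]; rewrite mem_rcons inE negb_or => /andP[].
apply/mapP => -[P2 P2F eql].
have h2 : vw_path e u p P2 := allP aF P2 P2F.
case: (eqVneq P [::]) => [eP|nP].
  subst P; case: (eqVneq P2 [::]) => [eP2|nP2]; first by move: PF; rewrite -eP2 P2F.
  have := last_mem u nP2; rewrite -eql /= => uP2.
  by move: (unP _ h2); rewrite uP2.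
have lP := last_mem u nP.
case: (eqVneq P2 [::]) => [eP2|nP2].
  by move: eql lP (unP _ hP); rewrite eP2 /= => -> ->.
have lP2 := last_mem u nP2.
move/hasP: dis; apply; exists (last u P); last by [].
by apply/flattenP; exists P2 => //; rewrite eql.
Qed.

Lemma kub B u p F : B \in blocks e -> u \in B -> p \in B -> u != p ->
  disjoint_vw_paths e u p F -> size F <= #|[set x in B | e x p]|.
Proof.
move=> kB uB pB nup /and3P[aF uF ufl].
rewrite -(size_map (last u)) cardE.
apply: uniq_leq_size; first exact: map_last_uniq aF uF ufl.
move=> x /mapP [P PF ->]; rewrite mem_enum inE.
have /andP[pP uP] := allP aF P PF.
rewrite (Stay kB uB pB nup pP uP) /=.
by move: pP; rewrite rcons_path => /andP[].
Qed.

Lemma klb B u p : B \in blocks e -> 2 < #|B| -> u \in B -> p \in B -> u != p -> e u p ->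
  exists F, disjoint_vw_paths e u p F /\ size F = 2.
Proof.
move=> kB cB uB pB nup eup.
have bB := blk_bl kB.
have [y yB nyu] : exists2 y, y \in B :\ p & y != u.
  have : ~~ (B \subset [set u; p]).
    apply/negP => /subset_leq_card; rewrite cards2 nup.
    by rewrite leqNgt cB.
  case/subsetPn => y yB; rewrite !inE negb_or => /andP[yu yp].
  by exists y => //; rewrite !inE yp.
have uBp : u \in B :\ p by rewrite !inE nup.
have uy : u != y by rewrite eq_sym.
have [x xBp eux] := nbr (bl_del bB pB) uBp yB uy.
have xu : x != u by apply/eqP => exu; move: eux; rewrite exu e_irr.
have xBu : x \in B :\ u by move: xBp; rewrite !inE xu => /andP[_ ->].
have pBu : p \in B :\ u by rewrite !inE eq_sym nup.
have xp : x != p by move: xBp; rewrite !inE => /andP[].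
have /connectP [s ps ls] := conn_in (bl_del bB uB) xBu pBu.
have [p' [pp up lp]] : exists p', [/\ path (restr e (B :\ u)) x p', uniq (x :: p') & last x p' = p].
  by move: ls; case: (shortenP ps) => p' a b _ ->; exists p'.
case/lastP: p' pp up lp => [|Q z] pp up lp; first by move: xp; rewrite -lp /= eqxx.
move: lp; rewrite last_rcons => ez; subst z.
have aQ := path_restr_all pp.
have pe := path_restr_e pp.
have uxQ : uniq (x :: rcons Q p) by [].
have unQ : u \notin rcons Q p.
  apply/negP => uQ; move: (allP aQ u uQ); by rewrite !inE eqxx.
have h1 : vw_path e u p [::] by rewrite /vw_path /= eup /= inE nup.
have h2 : vw_path e u p (x :: Q).
  rewrite /vw_path /= eux pe /= inE negb_or eq_sym xu unQ /=.
  by move: uxQ => /= ->.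
exists [:: [::]; x :: Q]; split => //.
rewrite /disjoint_vw_paths /= h1 h2 /= cats0.
by move: uxQ => /= /andP[]; rewrite mem_rcons inE negb_or rcons_uniq => /andP[_ ->] /andP[_ ->].
Qed.

Lemma nbr2 B p : B \in blocks e -> 2 < #|B| -> p \in B -> 1 < #|[set x in B | e x p]|.
Proof.
move=> kB cB pB; have bB := blk_bl kB.
have [y yB yp] : exists2 y, y \in B & y != p.
  have : ~~ (B \subset [set p]) by apply/negP => /subset_leq_card; rewrite cards1 leqNgt (ltn_trans _ cB).
  by case/subsetPn => y yB; rewrite inE => yp; exists y.
have py : p != y by rewrite eq_sym.
have [u1 u1B epu1] := nbr (bl_conn bB) pB yB py.
have u1p : u1 != p by apply/eqP => h; move: epu1; rewrite h e_irr.
have [y' y'B y'p] : exists2 y', y' \in B :\ u1 & y' != p.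
  have : ~~ (B \subset [set u1; p]).
    apply/negP => /subset_leq_card; rewrite cards2 u1p.
    by rewrite leqNgt cB.
  case/subsetPn => z zB; rewrite !inE negb_or => /andP[zu zp].
  by exists z => //; rewrite !inE zu.
have pBu : p \in B :\ u1 by rewrite !inE eq_sym u1p.
have py' : p != y' by rewrite eq_sym.
have [u2 u2B epu2] := nbr (bl_del bB u1B) pBu y'B py'.
have u12 : u1 != u2 by move: u2B; rewrite !inE eq_sym => /andP[].
have sub : [set u1; u2] \subset [set x in B | e x p].
  apply/subsetP => x; rewrite !inE => /orP[]/eqP->; first by rewrite u1B e_sym.
  by move: u2B; rewrite !inE => /andP[_ ->]; rewrite e_sym.
by move: (subset_leq_card sub); rewrite cards2 u12.
Qed.

End G6.



Section G7.
Variables (T : finType) (e : rel T).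
Hypothesis e_sym : symmetric e.
Hypothesis e_irr : irreflexive e.
Hypothesis e_conn : forall x y : T, connect e x y.
Hypothesis two : 1 < #|T|.
Variable W : {set T}.
Hypothesis resW : resolving e W.
Variable r : T.
Hypothesis rW : r \in W.

Lemma resP v1 v2 : (forall w, w \in W -> kappa e v1 w = kappa e v2 w) -> v1 = v2.
Proof.
move=> H; move: resW => /forallP/(_ v1)/forallP/(_ v2)/implyP H'.
apply/eqP/H'; apply/forallP => w; apply/implyP => wW; apply/eqP; exact: H.
Qed.

Lemma has_nbr x : exists y, e x y.
Proof.
have : ~~ ([set: T] \subset [set x]).
  by apply/negP => /subset_leq_card; rewrite cardsT cards1 leqNgt two.
case/subsetPn => y _; rewrite inE => yx.
have /connectP [[|z s] ps ls] := e_conn x y; first by move: yx; rewrite ls eqxx.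
by move: ps => /= /andP[exz _]; exists z.
Qed.

Lemma blk_card B : B \in blocks e -> 1 < #|B|.
Proof.
move=> kB; case: (ltnP 1 #|B|) => // small; exfalso.
pose x := odflt r [pick z in B].
have Bx : B \subset [set x].
  apply/subsetP => z zB; rewrite inE /x; case: pickP => [z' z'B|H]; last by move: (H z); rewrite zB.
  by move/card_le1_eqP: small => /(_ z z' zB z'B) ->.
have [y exy] := has_nbr x.
have bC := edge_bl e_sym e_irr exy.
have sBC : B \subset [set x; y] by apply: subset_trans Bx _; apply/subsetP => z; rewrite !inE => ->.
have eC := blk_max kB bC sBC.
have xy : x != y by apply/eqP => h; move: exy; rewrite h e_irr.
by move: small; rewrite -eC cards2 xy.
Qed.

Definition chd (B : {set T}) (v : T) := pb (child e r B v).

Lemma chdP (B : {set T}) v : chd B v <-> child e r B v.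
Proof. exact: pbE. Qed.

Lemma nc_entry (B : {set T}) v : v \in B -> ~ child e r B v -> Entry e r B v.
Proof. by move=> vB nc; apply: NNPP => nE; apply: nc. Qed.

Definition X1 := [set B : {set T} | [exists w in W, chd B w]].
Definition A1 := blocks e :&: X1.
Definition A2 := blocks e :\: X1.

Definition wit (B : {set T}) := [exists v, chd B v && [exists B' : {set T},
  [&& B' \in blocks e, B' != B, 2 < #|B'|, v \in B' & [exists w in W, w \in B']]]].
Definition Xw := [set B | wit B].
Definition A2w := A2 :&: Xw.
Definition A2b := A2 :\: Xw.

Lemma A1_blk B : B \in A1 -> B \in blocks e.
Proof. by rewrite inE => /andP[]. Qed.
Lemma A2_blk B : B \in A2 -> B \in blocks e.
Proof. by rewrite inE => /andP[]. Qed.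

Lemma A2w_A2 B : B \in A2w -> B \in A2.
Proof. by rewrite inE => /andP[]. Qed.
Lemma A2b_A2 B : B \in A2b -> B \in A2.
Proof. by rewrite inE => /andP[]. Qed.

Lemma A2_notW B v : B \in A2 -> child e r B v -> v \notin W.
Proof.
rewrite !inE => /andP[nX _] cv; apply/negP => vW; move/negP: nX; apply.
by apply/existsP; exists v; rewrite vW; apply/chdP.
Qed.

Lemma other_entry B B' v : B \in blocks e -> B' \in blocks e -> B' != B ->
  child e r B v -> v \in B' -> Entry e r B' v.
Proof.
move=> kB kB' nB cv vB'; apply: nc_entry => // cv'.
by move/eqP: nB; apply; apply: (Uchild e_sym e_conn kB' kB cv' cv).
Qed.

Lemma A1_bound : #|A1| < #|W|.
Proof.
pose f1 B := odflt r [pick w in W | chd B w].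
have f1P : forall B, B \in A1 -> f1 B \in W /\ child e r B (f1 B).
  move=> B; rewrite !inE => /andP[kB /existsP[w /andP[wW cw]]].
  rewrite /f1; case: pickP => [w' /andP[w'W cw']|H] /=; first by split => //; apply/chdP.
  by move: (H w); rewrite wW cw.
have inj : {in A1 &, injective f1}.
  move=> B1 B2 h1 h2 e12; have [_ c1] := f1P _ h1; have [_ c2] := f1P _ h2.
  rewrite e12 in c1; exact: (Uchild e_sym e_conn (A1_blk h1) (A1_blk h2) c1 c2).
have sub : f1 @: A1 \subset W :\ r.
  apply/subsetP => w /imsetP [B hB ->]; have [wW cw] := f1P _ hB.
  by rewrite !inE wW andbT; apply: (child_neq_r cw).
rewrite (cardsD1 r W) rW add1n ltnS -(card_in_imset inj).
exact: subset_leq_card.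
Qed.

Lemma A2w_bound : #|A2w| <= #|A1|.
Proof.
pose P B (B' : {set T}) := [exists v, chd B v && [&& B' \in blocks e, B' != B, 2 < #|B'|, v \in B' & [exists w in W, w \in B']]].
pose f2 B := odflt set0 [pick B' | P B B'].
have f2P : forall B, B \in A2w -> exists v, [/\ child e r B v, f2 B \in blocks e, f2 B != B,
    v \in f2 B & exists2 w, w \in W & w \in f2 B].
  move=> B; rewrite !inE => /andP[_ /existsP [v /andP[cv /existsP[B' hB']]]].
  rewrite /f2; case: pickP => [B'' /existsP [v' /andP[cv' /and5P[k1 n1 _ v1 /existsP[w /andP[wW w1]]]]]|H] /=.
    exists v'; split => //; first by apply/chdP.
      by move: k1; rewrite inE.
    by exists w.

  by move: (H B') => /existsP; case; exists v; rewrite cv.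
have inj : {in A2w &, injective f2}.
  move=> B1 B2 h1 h2 e12.
  have [v1 [c1 k1 n1 m1 _]] := f2P _ h1; have [v2 [c2 k2 n2 m2 _]] := f2P _ h2.
  have kB1 := A2_blk (A2w_A2 h1).
  have kB2 := A2_blk (A2w_A2 h2).
  have E1 := other_entry kB1 k1 n1 c1 m1.
  rewrite e12 in k1 n1 m1 E1.
  have E2 := other_entry kB2 k2 n2 c2 m2.
  have ev := Uent e_sym k2 E1 E2; subst v2.
  exact: (Uchild e_sym e_conn kB1 kB2 c1 c2).
have sub : f2 @: A2w \subset A1.
  apply/subsetP => B' /imsetP [B hB ->].
  have [v [cv k' n' m' [w wW w']]] := f2P _ hB.
  have hB2 := A2w_A2 hB.
  have kB := A2_blk hB2.
  rewrite inE k' inE; apply/existsP; exists w; rewrite wW; apply/chdP; split => // Ew.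
  have Ev := other_entry kB k' n' cv m'.
  have ewv := Uent e_sym k' Ew Ev; subst w.
  by move: (A2_notW hB2 cv); rewrite wW.
by rewrite -(card_in_imset inj); apply: subset_leq_card.
Qed.

Definition Free := [set v | (v \notin W) && [forall w in W, kappa e v w == Some 1]].

Lemma Free_le1 : #|Free| <= 1.
Proof.
apply/card_le1_eqP => x y; rewrite !inE => /andP[_ /forallP Hx] /andP[_ /forallP Hy].
apply: resP => w wW.
by move: (Hx w) (Hy w); rewrite wW /= => /eqP-> /eqP->.
Qed.

Lemma A2b_child B u : B \in A2b -> child e r B u -> forall w, w \in W ->
  forall B'', B'' \in blocks e -> u \in B'' -> w \in B'' -> 2 < #|B''| ->
  B'' = B /\ Entry e r B w.
Proof.
move=> hB cu w wW B'' k'' u'' w'' c''.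
have hB2 := A2b_A2 hB.
case: (eqVneq B'' B) => [eB|nB].
  subst B''; split => //; apply: nc_entry => // cw.
  by move: (A2_notW hB2 cw); rewrite wW.
exfalso; move: hB; rewrite !inE => /andP[/negP nw _]; apply: nw.
apply/existsP; exists u; apply/andP; split; first by apply/chdP.
apply/existsP; exists B''; rewrite k'' nB c'' u'' /=.
by apply/existsP; exists w; rewrite wW.
Qed.

Lemma A2b_nobig B p : B \in A2b -> 2 < #|B| -> p \in W -> Entry e r B p -> False.
Proof.
move=> hB cB pW Ep.
have hB2 := A2b_A2 hB.
have kB := A2_blk hB2.
have pB : p \in B by case: Ep.
set N := [set x in B | e x p].
have Nch : forall u, u \in N -> child e r B u /\ u != p.
  move=> u; rewrite inE => /andP[uB eup].
  have up : u != p by apply/eqP => h; move: eup; rewrite h e_irr.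
  split => //; split => // Eu.
  by move: up; rewrite (Uent e_sym kB Eu Ep) eqxx.
have K1u : forall u, u \in N -> forall w, w \in W -> w != p -> kappa e u w = Some 1.
  move=> u uN w wW wp; have [cu up] := Nch u uN.
  have uw : u != w by apply/eqP => h; move: (A2_notW hB2 cu); rewrite h wW.
  apply: (K1 e_sym e_irr e_conn uw) => B'' k'' u'' w''; rewrite leqNgt; apply/negP => c''.
  have [_ Ew] := A2b_child hB cu wW k'' u'' w'' c''.
  by move: wp; rewrite (Uent e_sym kB Ew Ep) eqxx.
have Kp : forall u, u \in N -> exists m, kappa e u p = Some m /\ 2 <= m <= #|N|.
  move=> u uN; have [cu up] := Nch u uN.
  have uB : u \in B by case: cu.
  have eup : e u p by move: uN; rewrite inE => /andP[].
  have [F [dF sF]] := klb e_irr kB cB uB pB up eup.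
  have s2 : size F < #|T|.+2 by rewrite sF; lia.
  have [m [km mge]] := kappa_ge up dF s2.
  have [m' [km' mle]] := kappa_le (m := #|N|) up (fun F0 dF0 => kub e_sym kB uB pB up dF0).
  rewrite km in km'; case: km' => em; subst m'.
  by exists m; rewrite km -sF mge mle.
pose g u := odflt 0 (kappa e u p).
have ginj : {in N &, injective g}.
  move=> u1 u2 h1 h2 eg; apply: resP => w wW.
  case: (eqVneq w p) => [->|wp]; last by rewrite !K1u.
  have [m1 [k1 _]] := Kp u1 h1; have [m2 [k2 _]] := Kp u2 h2.
  by move: eg; rewrite /g k1 k2 /= => ->.
have nN : 1 < #|N| := nbr2 e_sym e_irr kB cB pB.
have us : uniq (map g (enum N)).
  by rewrite map_inj_in_uniq ?enum_uniq // => x y; rewrite !mem_enum; apply: ginj.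
have ss : {subset map g (enum N) <= seq.iota 2 (#|N|.-1)}.
  move=> m /mapP [u]; rewrite mem_enum => uN ->.
  have [m' [k' /andP[m2 mN]]] := Kp u uN.
  rewrite /g k' /= mem_iota m2 /=; lia.
have := uniq_leq_size us ss; rewrite size_map size_iota -cardE; lia.
Qed.

Lemma A2b_bound : #|A2b| <= 1.
Proof.
pose f3 B := odflt r [pick v | chd B v].
have f3P : forall B, B \in A2b -> child e r B (f3 B).
  move=> B hB; have kB := A2_blk (A2b_A2 hB).
  have [x [y [xB yB xy]]] := card_gt1P (blk_card kB).
  have [v cv] := child_exists e_sym r kB xB yB xy.
  rewrite /f3; case: pickP => [v' cv' /=|H]; first by apply/chdP.
  by move: (H v) => /=; move: cv => /chdP ->.
have inj : {in A2b &, injective f3}.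
  move=> B1 B2 h1 h2 e12; have c1 := f3P _ h1; have c2 := f3P _ h2.
  rewrite e12 in c1.
  have k1 := A2_blk (A2b_A2 h1).
  have k2 := A2_blk (A2b_A2 h2).
  exact: (Uchild e_sym e_conn k1 k2 c1 c2).
have sub : f3 @: A2b \subset Free.
  apply/subsetP => v /imsetP [B hB ->].
  have cv := f3P _ hB.
  have hB2 := A2b_A2 hB.
  rewrite inE (A2_notW hB2 cv) /=; apply/forallP => w; apply/implyP => wW; apply/eqP.
  have vw : f3 B != w by apply/eqP => h; move: (A2_notW hB2 cv); rewrite h wW.
  apply: (K1 e_sym e_irr e_conn vw) => B'' k'' v'' w''; rewrite leqNgt; apply/negP => c''.
  have [eB Ew] := A2b_child hB cv wW k'' v'' w'' c''; subst B''.
  exact: (A2b_nobig hB c'' wW Ew).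
rewrite -(card_in_imset inj); apply: leq_trans Free_le1; exact: subset_leq_card.
Qed.

Lemma main_bound : (nblocks e).+1 <= 2 * #|W|.
Proof.
have h1 := A1_bound; have h2 := A2w_bound; have h3 := A2b_bound.
have eb : nblocks e = #|A1| + #|A2w| + #|A2b|.
  by rewrite -addnA /A2w /A2b cardsID /A1 /A2 cardsID.
rewrite eb; lia.
Qed.

End G7.



Lemma resolving_setT (T : finType) (e : rel T) : resolving e [set: T].
Proof.
apply/forallP => v1; apply/forallP => v2; apply/implyP => /forallP/(_ v1).
rewrite inE /= /kappa eqxx; case: (eqVneq v2 v1) => // _ /eqP.
Qed.

Lemma key_bound (T : finType) (e : rel T)
  (e_sym : symmetric e) (e_irr : irreflexive e)
  (e_conn : forall x y : T, connect e x y)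
  (two : 1 < #|T|) : (nblocks e).+1 <= 2 * cdim e.
Proof.
have gen : forall W, resolving e W -> (nblocks e).+1 <= 2 * #|W|.
  move=> W rW; case: (set_0Vmem W) => [W0|[r rr]].
    exfalso; have t2 : 1 < #|[set: T]| by rewrite cardsT.
    have [x [y [_ _ xy]]] := card_gt1P t2.
    move/eqP: xy; apply; apply/eqP; move: rW => /forallP/(_ x)/forallP/(_ y)/implyP; apply.
    by apply/forallP => w; rewrite W0 inE.
  exact: (main_bound e_sym e_irr e_conn two rW rr).
rewrite /cdim; apply: (big_ind (fun x => (nblocks e).+1 <= 2 * x)).
- by rewrite -(cardsT T); apply: gen; apply: resolving_setT.
- by move=> x y hx hy; rewrite /minn; case: ifP.
- by move=> W; apply: gen.
Qed.

Import Order.TTheory GRing.Theory Num.Theory.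
Unset Implicit Arguments.

Theorem mainTheorem13 (T : finType) (e : rel T)
  (e_sym : symmetric e) (e_irr : irreflexive e)
  (e_conn : forall x y : T, connect e x y)
  (two : 1 < #|T|) :
  (((nblocks e)%:R + 1) / 2 <= (cdim e)%:R :> rat)%R.
Proof.
have k := key_bound e_sym e_irr e_conn two.
rewrite ler_pdivrMr // natr1 -natrM ler_nat.
by rewrite mulnC.
Qed.
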